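(* Let $(G,\cdot)$ be a WIPL with identity $e$, let $(H,\circ)$ be a WIPL with identity $e'$, and let $(A,B,C)$ be an isotopism from $(G,\cdot)$ to $(H,\circ)$. Put $a=e'A^{-1}$ and $b=e'B^{-1}$. Assume that either $(x\cdot y)^\rho=x^\rho\cdot y^\lambda$ for all $x,y\in G$, or $(x\cdot y)^\lambda=x^\lambda\cdot y^\rho$ for all $x,y\in G$. Then $C$ is an isomorphism from $(G,\cdot)$ onto $(H,\circ)$ if and only if $(L_b,R_a,I)\in AUT(G,\cdot)$. Moreover, in that case $(G,\cdot)$ and $(H,\circ)$ are (isomorphic) cross inverse property loops, $R_aL_b=I$ and $b\cdot a=e$.
   Context: Maps are written on the right of their arguments ($xU$) and composed left to right: $UV$ means first apply $U$, then $V$; $I$ is the identity map. For a loop $(L,\cdot)$ with identity $e$, $x^\rho$ and $x^\lambda$ denote the right and left inverses of $x$ ($x x^\rho=e=x^\lambda x$), and $J_\rho:x\mapsto x^\rho$, $J_\lambda:x\mapsto x^\lambda$, $L_x:y\mapsto xy$, $R_x:y\mapsto yx$. $L$ is a weak inverse property loop (WIPL) if $xy\cdot z=e$ implies $x\cdot yz=e$ for all $x,y,z\in L$; it is a cross inverse property loop (CIPL) if $xy\cdot x^\rho=y$ for all $x,y\in L$. A triple $(U,V,W)$ of bijections $G\to H$ between loops $(G,\cdot)$ and $(H,\circ)$ is an isotopism if $xU\circ yV=(x\cdot y)W$ for all $x,y\in G$; an autotopism is an isotopism of a loop to itself, and $AUT(G,\cdot)$ denotes the group of autotopisms under componentwise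 composition. *)

(* Defs.v *)
Definition is_bij {X Y : Type} (f : X -> Y) : Prop :=
  exists g : Y -> X, (forall x, g (f x) = x) /\ (forall y, f (g y) = y).

Definition is_loop {L : Type} (mul : L -> L -> L) (e : L) : Prop :=
  (forall x, mul e x = x /\ mul x e = x) /\
  (forall a b, exists x, mul a x = b /\ forall x', mul a x' = b -> x' = x) /\
  (forall a b, exists y, mul y a = b /\ forall y', mul y' a = b -> y' = y).

Definition is_WIPL {L : Type} (mul : L -> L -> L) (e : L) : Prop :=
  is_loop mul e /\
  forall x y z, mul (mul x y) z = e -> mul x (mul y z) = e.

(* cross inverse property: xy . x^rho = y, where x^rho is the (unique) r with x r = e *)
Definition is_CIPL {L : Type} (mul : L -> L -> L) (e : L) : Prop :=
  is_loop mul e /\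
  forall x xr, mul x xr = e -> forall y, mul (mul x y) xr = y.

(* (x.y)^rho = x^rho . y^lambda for all x, y  (x x^rho = e, y^lambda y = e) *)
Definition rho_of_prod_cond {L : Type} (mul : L -> L -> L) (e : L) : Prop :=
  forall x y xr yl, mul x xr = e -> mul yl y = e ->
    mul (mul x y) (mul xr yl) = e.

(* (x.y)^lambda = x^lambda . y^rho for all x, y *)
Definition lambda_of_prod_cond {L : Type} (mul : L -> L -> L) (e : L) : Prop :=
  forall x y xl yr, mul xl x = e -> mul y yr = e ->
    mul (mul xl yr) (mul x y) = e.

Definition is_isotopism {G H : Type} (mulG : G -> G -> G) (mulH : H -> H -> H)
  (U V W : G -> H) : Prop :=
  is_bij U /\ is_bij V /\ is_bij W /\
  forall x y, mulH (U x) (V y) = W (mulG x y).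

Definition is_autotopism {G : Type} (mulG : G -> G -> G) (U V W : G -> G) : Prop :=
  is_isotopism mulG mulG U V W.

Definition is_isomorphism {G H : Type} (mulG : G -> G -> G) (mulH : H -> H -> H)
  (C : G -> H) : Prop :=
  is_bij C /\ forall x y, C (mulG x y) = mulH (C x) (C y).

(* Main.v *)
Require Import Defs.

Section L.
Context {L : Type} (mul : L -> L -> L) (e : L) (hl : is_loop mul e).

Lemma idl x : mul e x = x. Proof. destruct hl as [h _]. apply h. Qed.
Lemma idr x : mul x e = x. Proof. destruct hl as [h _]. apply h. Qed.
Lemma lsolv a c : exists x, mul a x = c. Proof. destruct hl as [_ [h _]]. destruct (h a c) as [x [hx _]]. eauto. Qed.
Lemma rsolv a c : exists y, mul y a = c. Proof. destruct hl as [_ [_ h]]. destruct (h a c) as [x [hx _]]. eauto. Qed.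
Lemma lcan a x y : mul a x = mul a y -> x = y.
Proof. intro E. destruct hl as [_ [h _]]. destruct (h a (mul a x)) as [x0 [_ U]].
  rewrite (U x eq_refl). symmetry. apply U. symmetry; exact E. Qed.
Lemma rcan a x y : mul x a = mul y a -> x = y.
Proof. intro E. destruct hl as [_ [_ h]]. destruct (h a (mul x a)) as [x0 [_ U]].
  rewrite (U x eq_refl). symmetry. apply U. symmetry; exact E. Qed.

Definition Qp := forall y yr z, mul y yr = e -> mul yr (mul z y) = z.

Lemma cip_of_Q : Qp -> is_CIPL mul e.
Proof.
  intro Q. split; [exact hl|]. intros x xr Hx w.
  assert (Hxrx : mul xr x = e). { pose proof (Q x xr e Hx) as h. rewrite idl in h. exact h. }
  assert (R : forall y yr z, mul y yr = e -> mul (mul yr z) y = z).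
  { intros y yr z Hy. destruct (rsolv y z) as [t Ht].
    assert (E : mul yr z = t). { rewrite <- Ht. apply Q; exact Hy. }
    rewrite E. exact Ht. }
  apply (R xr x w Hxrx).
Qed.

Hypothesis wip : forall x y z, mul (mul x y) z = e -> mul x (mul y z) = e.

Lemma Q_of_cond : rho_of_prod_cond mul e \/ lambda_of_prod_cond mul e -> Qp.
Proof.
  intros [hr|hla] y yr z Hy.
  - destruct (rsolv z e) as [x Hx].
    pose proof (hr x yr z y Hx Hy) as h. apply wip in h.
    apply (lcan x). rewrite h, Hx. reflexivity.
  - destruct (rsolv z e) as [xl Hx].
    pose proof (hla z y xl yr Hx Hy) as h. apply wip in h.
    apply (lcan xl). rewrite h, Hx. reflexivity.
Qed.

Hypothesis cip : is_CIPL mul e.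

Lemma cip1 x xr y : mul x xr = e -> mul (mul x y) xr = y.
Proof. intro H. destruct cip as [_ c]. apply c; exact H. Qed.

Lemma cip2 x xr y : mul x xr = e -> mul x (mul y xr) = y.
Proof. intro H. destruct (lsolv x y) as [w Hw]. rewrite <- Hw. rewrite cip1 by exact H. reflexivity. Qed.

Lemma aip x xr y yr : mul x xr = e -> mul y yr = e -> mul (mul x y) (mul xr yr) = e.
Proof.
  intros Hx Hy. destruct (lsolv (mul x y) e) as [z Hz].
  pose proof (wip _ _ _ Hz) as h.
  assert (E : mul y z = xr). { apply (lcan x). rewrite h, Hx. reflexivity. }
  assert (E2 : z = mul xr yr). { apply (lcan y). rewrite E. symmetry. apply cip2; exact Hy. }
  rewrite <- E2. exact Hz.
Qed.
End L.

Theorem mainTheorem4 (G H : Type) (mulG : G -> G -> G) (e : G)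
  (mulH : H -> H -> H) (e' : H)
  (hG : is_WIPL mulG e) (hH : is_WIPL mulH e')
  (A B C : G -> H) (hiso : is_isotopism mulG mulH A B C)
  (a b : G) (ha : A a = e') (hb : B b = e')
  (hcond : rho_of_prod_cond mulG e \/ lambda_of_prod_cond mulG e) :
  (is_isomorphism mulG mulH C <->
     is_autotopism mulG (fun x => mulG b x) (fun x => mulG x a) (fun x => x)) /\
  (is_isomorphism mulG mulH C ->
     is_CIPL mulG e /\ is_CIPL mulH e' /\
     (forall x, mulG b (mulG x a) = x) /\ mulG b a = e).
Proof.
  destruct hG as [lG wG]. destruct hH as [lH wH].
  destruct hiso as [bA [bB [bC hom]]].
  assert (cipG : is_CIPL mulG e) by (apply (cip_of_Q mulG e lG); apply (Q_of_cond mulG e lG wG hcond)).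
  assert (CA : forall x, C (mulG x b) = A x).
  { intro x. rewrite <- hom, hb. apply (idr mulH e' lH). }
  assert (CB : forall y, C (mulG a y) = B y).
  { intro y. rewrite <- hom, ha. apply (idl mulH e' lH). }
  destruct bC as [g [gC Cg]].
  assert (fwd : is_isomorphism mulG mulH C ->
     is_autotopism mulG (fun x => mulG b x) (fun x => mulG x a) (fun x => x) /\ mulG b a = e).
  { intros [_ hC].
    assert (T : forall x y, mulG (mulG x b) (mulG a y) = mulG x y).
    { intros x y. rewrite <- (gC (mulG (mulG x b) (mulG a y))), <- (gC (mulG x y)).
      rewrite hC, CA, CB, hom. reflexivity. }
    assert (R1 : forall x, mulG (mulG x b) a = x).
    { intro x. pose proof (T x e) as h. rewrite (idr mulG e lG), (idr mulG e lG) in h. exact h. }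
    assert (L1 : forall y, mulG b (mulG a y) = y).
    { intro y. pose proof (T e y) as h. rewrite (idl mulG e lG), (idl mulG e lG) in h. exact h. }
    assert (ba : mulG b a = e). { pose proof (L1 e) as h. rewrite (idr mulG e lG) in h. exact h. }
    assert (R2 : forall w, mulG (mulG w a) b = w).
    { intro w. apply (rcan mulG e lG a). apply R1. }
    assert (L2 : forall w, mulG a (mulG b w) = w).
    { intro w. apply (lcan mulG e lG b). apply L1. }
    split; [|exact ba].
    split. { exists (fun x => mulG a x). split; [apply L2|apply L1]. }
    split. { exists (fun x => mulG x b). split; [apply R2|apply R1]. }
    split. { exists (fun x => x). split; reflexivity. }
    intros x y. pose proof (T (mulG (mulG b x) a) (mulG b (mulG y a))) as E.
    rewrite R2, L2 in E. rewrite E.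
    rewrite (cip1 mulG e cipG b a x ba), (cip2 mulG e lG cipG b a y ba). reflexivity. }
  assert (iso_cip : is_isomorphism mulG mulH C -> is_CIPL mulH e').
  { intros [_ hC]. split; [exact lH|].
    assert (Ce : C e = e').
    { apply (lcan mulH e' lH (C e)). rewrite <- hC, (idr mulG e lG), (idr mulH e' lH). reflexivity. }
    intros x xr Hx y.
    rewrite <- (Cg x), <- (Cg xr), <- (Cg y) in *.
    rewrite <- hC in Hx. rewrite <- Ce in Hx.
    assert (E : mulG (g x) (g xr) = e). { rewrite <- (gC (mulG (g x) (g xr))), Hx. apply gC. }
    rewrite <- !hC. f_equal. apply (cip1 mulG e cipG); exact E. }
  split.
  - split; [intro h; apply (fwd h)|].
    intros [_ [_ [_ AT]]].
    split; [exists g; split; assumption|].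
    assert (ba : mulG b a = e).
    { pose proof (AT e e) as h. rewrite (idr mulG e lG), (idl mulG e lG), (idl mulG e lG) in h. exact h. }
    assert (T2 : forall p q, mulG p (mulG a q) = mulG (mulG p q) a).
    { intros p q. destruct (rsolv mulG e lG q e) as [x Hx].
      pose proof (aip mulG e lG wG cipG b a x q ba Hx) as h.
      pose proof (cip1 mulG e cipG (mulG b x) (mulG a q) (mulG (mulG p q) a) h) as h2.
      rewrite AT in h2. rewrite (cip2 mulG e lG cipG x q p Hx) in h2. exact h2. }
    assert (T3 : forall p q, mulG (mulG p a) q = mulG a (mulG p q)).
    { intros p q. destruct (rsolv mulG e lG q e) as [x Hx].
      pose proof (cip1 mulG e cipG x q (mulG a (mulG p q)) Hx) as h.
      rewrite T2 in h. rewrite (cip2 mulG e lG cipG x q p Hx) in h. exact h. }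
    assert (L1 : forall q, mulG b (mulG a q) = q).
    { intro q. rewrite T2. apply (cip1 mulG e cipG); exact ba. }
    assert (L2 : forall v, mulG a (mulG b v) = v).
    { intro v. apply (lcan mulG e lG b). apply L1. }
    assert (comm : forall p, mulG p a = mulG a p).
    { intro p. pose proof (T3 p e) as h. rewrite !(idr mulG e lG) in h. exact h. }
    assert (M : forall u v, mulG (mulG u a) (mulG b v) = mulG u v).
    { intros u v. rewrite T3, <- comm, <- T2, L2. reflexivity. }
    assert (R2 : forall u, mulG (mulG u a) b = u).
    { intro u. pose proof (M u e) as h. rewrite !(idr mulG e lG) in h. exact h. }
    intros u v. rewrite <- (M u v), <- hom.
    rewrite <- (CA (mulG u a)), <- (CB (mulG b v)), R2, L2. reflexivity.
  - intro h. destruct (fwd h) as [[_ [_ [_ AT]]] ba].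
    split; [exact cipG|]. split; [apply iso_cip; exact h|].
    split; [|exact ba].
    intro x. apply (cip2 mulG e lG cipG); exact ba.
Qed.
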